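(* Let $G=(V,E)$ be a finite simple graph with diversity $D=D(G)$ and maximum clique size $S$, let $t>1$ be an integer, let $k=\lceil S/t\rceil$, and let $G'$ be a connector of $G$ with parameter $t$. Let $\varphi$ be any proper vertex coloring of $G'$, and for each color $i$ let $G_i$ be the subgraph of $G$ induced by the vertices with $\varphi$-color $i$. Then for every $i$, the maximum degree of $G_i$ is at most $(k-1)\cdot D$.
   Context: The diversity of a vertex $v$ of a graph $G$ is the number of maximal cliques of $G$ containing $v$ (a clique is maximal if no clique of $G$ strictly contains it); the diversity $D(G)$ is the maximum diversity over all vertices. Let $\mathcal Q$ be the set of all maximal cliques of $G$ and let $S(Q)$ denote the number of vertices of $Q$. A connector of $G$ with parameter $t$ is obtained as follows: each clique $Q\in\mathcal Q$ (independently of the other cliques) partitions its vertex set into $k(Q)=\lceil S(Q)/t\rceil$ parts $V_1(Q),\dots,V_{k(Q)}(Q)$, each of size at most $t$. The connector is $G'=(V,E')$ with $E'=\{(u,v)\in E : u,v\in V_i(Q)\text{ for some }Q\in\mathcal Q\text{ and some }i\}$. *)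

(* Defs.v *)
From mathcomp Require Import all_boot.
Set Implicit Arguments. Unset Strict Implicit. Unset Printing Implicit Defensive.

(* A finite simple graph: vertex type T : finType, adjacency e : rel T,
   assumed symmetric and irreflexive in the theorem. *)

Definition is_clique (T : finType) (e : rel T) (Q : {set T}) : bool :=
  [forall x in Q, forall y in Q, (x != y) ==> e x y].

Definition is_maxclique (T : finType) (e : rel T) (Q : {set T}) : bool :=
  is_clique e Q && [forall R : {set T}, (Q \proper R) ==> ~~ is_clique e R].

Definition vdiversity (T : finType) (e : rel T) (v : T) : nat :=
  #|[set Q : {set T} | is_maxclique e Q & v \in Q]|.

Definition diversity (T : finType) (e : rel T) : nat :=
  \max_(v : T) vdiversity e v.

Definition max_clique_size (T : finType) (e : rel T) : nat :=
  \max_(Q : {set T} | is_clique e Q) #|Q|.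

Definition ceil_div (a b : nat) : nat := (a + b.-1) %/ b.

(* p Q : T -> nat assigns to each vertex of a maximal clique Q the index
   (0 .. k(Q)-1) of its part V_{i+1}(Q). *)
Definition connector_partition (T : finType) (e : rel T) (t : nat)
  (p : {set T} -> T -> nat) : Prop :=
  forall Q : {set T}, is_maxclique e Q ->
    (forall x, x \in Q -> p Q x < ceil_div #|Q| t) /\
    (forall i, i < ceil_div #|Q| t ->
       0 < #|[set x in Q | p Q x == i]| <= t).

Definition connector_rel (T : finType) (e : rel T) (p : {set T} -> T -> nat) : rel T :=
  fun u v => e u v &&
    [exists Q : {set T}, [&& is_maxclique e Q, u \in Q, v \in Q & p Q u == p Q v]].

Definition proper_coloring (T : finType) (r : rel T) (phi : T -> nat) : Prop :=
  forall u v, r u v -> phi u != phi v.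

Definition class_degree (T : finType) (e : rel T) (phi : T -> nat) (i : nat) (v : T) : nat :=
  #|[set u | e v u & phi u == i]|.

(* Main.v *)
Require Import Defs.
From mathcomp Require Import all_boot.

Lemma exists_maxclique (T : finType) (e : rel T) (A : {set T}) :
  is_clique e A -> exists Q, is_maxclique e Q && (A \subset Q).
Proof.
move=> hA.
pose P := fun R : {set T} => is_clique e R && (A \subset R).
have PA : P A by rewrite /P hA subxx.
case: (arg_maxnP (fun R : {set T} => #|R|) PA) => R /andP[cR sAR] hmax.
exists R; rewrite /is_maxclique cR sAR /= andbT.
apply/forallP => R'; apply/implyP => prR; apply/negP => cR'.
have := hmax R'; rewrite /P cR' (subset_trans sAR (proper_sub prR)) => /(_ isT).
by move=> /= h; move: (proper_card prR); rewrite ltnNge h.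
Qed.

Theorem mainTheorem2 (T : finType) (e : rel T)
  (e_sym : symmetric e) (e_irr : irreflexive e)
  (t : nat) (ht : 1 < t)
  (p : {set T} -> T -> nat) (hp : connector_partition e t p)
  (phi : T -> nat) (hphi : proper_coloring (connector_rel e p) phi) :
  forall (i : nat) (v : T), phi v = i ->
    class_degree e phi i v <=
      (ceil_div (max_clique_size e) t).-1 * diversity e.
Proof.
move=> i v hv; subst i.
set k := ceil_div (max_clique_size e) t.
set N := [set u | e v u & phi u == phi v].
set C := [set Q : {set T} | is_maxclique e Q & v \in Q].
have cover : forall u, u \in N -> exists2 Q, Q \in C & u \in Q.
  move=> u; rewrite inE => /andP[evu _].
  have : is_clique e [set v; u].
    apply/forallP => x; apply/implyP; rewrite !inE => /orP[]/eqP->;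
    apply/forallP => y; apply/implyP; rewrite !inE => /orP[]/eqP->;
    rewrite ?eqxx //= ?evu ?implybT //; by rewrite e_sym evu implybT.
  case/exists_maxclique => Q /andP[mQ sQ].
  exists Q; last by apply: (subsetP sQ); rewrite !inE eqxx orbT.
  by rewrite inE mQ (subsetP sQ) // !inE eqxx.
have bound : forall Q, Q \in C -> #|N :&: Q| <= k.-1.
  move=> Q; rewrite inE => /andP[mQ vQ].
  have [hlt hsz] := hp Q mQ.
  set kQ := ceil_div #|Q| t.
  have cQ : is_clique e Q by case/andP: mQ.
  have kQk : kQ <= k.
    rewrite /kQ /k /ceil_div leq_div2r // leq_add2r.
    by apply: (@leq_bigmax_cond _ (fun R : {set T} => is_clique e R) (fun R => #|R|) Q).
  have step : #|N :&: Q| <= kQ.-1.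
    pose s := [seq p Q u | u in N :&: Q].
    have us : uniq s.
      rewrite map_inj_in_uniq ?enum_uniq // => u w.
      rewrite !mem_enum !inE => /andP[/andP[evu pu] uQ] /andP[/andP[evw pw] wQ] puw.
      apply/eqP; apply/negPn/negP => nuw.
      have euw : e u w.
        by move/forallP: cQ => /(_ u) /implyP /(_ uQ) /forallP /(_ w) /implyP /(_ wQ) /implyP; apply.
      have : connector_rel e p u w.
        rewrite /connector_rel euw; apply/existsP; exists Q; by rewrite mQ uQ wQ puw eqxx.
      by move/hphi; rewrite (eqP pu) (eqP pw) eqxx.
    have ui : uniq (iota 0 kQ) := iota_uniq 0 kQ.
    have pvin : p Q v \in iota 0 kQ by rewrite mem_iota add0n hlt.
    have : size s <= size (rem (p Q v) (iota 0 kQ)).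
      apply: uniq_leq_size => // x /mapP [u]; rewrite mem_enum !inE => /andP[/andP[evu pu] uQ] ->.
      rewrite (mem_rem_uniq _ ui) inE /=; apply/andP; split; last by rewrite mem_iota add0n hlt.
      apply/negP => /eqP puv.
      have : connector_rel e p v u.
        rewrite /connector_rel evu; apply/existsP; exists Q; by rewrite mQ vQ uQ puv eqxx.
      by move/hphi; rewrite (eqP pu) eqxx.
    by rewrite size_map -cardE size_rem // size_iota.
  apply: leq_trans step _; by rewrite -!subn1 leq_sub2r.
have h1 : #|N| <= \sum_(Q in C) #|N :&: Q|.
  have E : forall Q : {set T}, #|N :&: Q| = \sum_(u in N) (u \in Q).
    by move=> Q; rewrite -sum1_card big_mkcond /= [RHS]big_mkcond /=;
       apply: eq_bigr => u _; rewrite inE; case: (u \in N); case: (u \in Q).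
  rewrite (eq_bigr _ (fun Q _ => E Q)).
  rewrite exchange_big /= -sum1_card; apply: leq_sum => u uN.
  case: (cover u uN) => Q QC uQ.
  by rewrite (bigD1 Q) //= uQ leq_addr.
have h2 : \sum_(Q in C) #|N :&: Q| <= #|C| * k.-1.
  by rewrite -sum_nat_const; apply: leq_sum.
have h3 : #|C| <= diversity e by exact: (leq_bigmax (F := vdiversity e) v).
rewrite /class_degree -/N.
apply: leq_trans h1 _; apply: leq_trans h2 _.
by rewrite mulnC leq_mul2l h3 orbT.
Qed.
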